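(* Let $D\ge1$, let $Q_D$ be the $D$-dimensional hypercube on $X=\{0,1\}^D$ with adjacency matrix $A$, and let $B$ be a real matrix with rows and columns indexed by $X$. Then $B$ is $A$-like if and only if $B$ commutes with $A$ and $$\alpha^*_i\alpha^*_jB-\alpha^*_iB\alpha^*_j-\alpha^*_jB\alpha^*_i+B\alpha^*_i\alpha^*_j=0\qquad(1\le i<j\le D).$$
   Context: $Q_D$ is the graph with vertex set $X=\{0,1\}^D$ (sequences $x=(x_1,\ldots,x_D)$), two vertices adjacent iff they differ in exactly one coordinate. A matrix $B$ is $A$-like if $BA=AB$ and $B_{xy}=0$ for all $x,y\in X$ that are neither equal nor adjacent. For $1\le i\le D$, $\alpha^*_i$ is the diagonal matrix with $(x,x)$-entry $1$ if $x_i=0$ and $-1$ if $x_i=1$. *)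

(* Defs.v *)
From mathcomp Require Import all_boot all_order all_algebra.
Set Implicit Arguments. Unset Strict Implicit. Unset Printing Implicit Defensive.
Import Order.TTheory GRing.Theory Num.Theory.
Local Open Scope ring_scope.

(* Vertex set X = {0,1}^D, coordinates indexed by 'I_D (coordinate i+1 of the
   paper is index i here); false = 0, true = 1. *)
Definition cube (D : nat) := {ffun 'I_D -> bool}.

Definition cmx (R : Type) (D : nat) := 'M[R]_(#|cube D|, #|cube D|).

Definition cent (R : Type) (D : nat) (B : cmx R D) (x y : cube D) : R :=
  B (enum_rank x) (enum_rank y).

Definition cmk (R : Type) (D : nat) (f : cube D -> cube D -> R) : cmx R D :=
  \matrix_(i, j) f (enum_val i) (enum_val j).

Definition hdist (D : nat) (x y : cube D) : nat := #|[set i | x i != y i]|.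
Definition adjQ (D : nat) (x y : cube D) : bool := hdist x y == 1%N.

Definition adjA (R : pzRingType) (D : nat) : cmx R D :=
  cmk (fun x y => if adjQ x y then 1 else 0).

Definition A_like (R : pzRingType) (D : nat) (B : cmx R D) : Prop :=
  B *m adjA R D = adjA R D *m B /\
  forall x y : cube D, x != y -> ~~ adjQ x y -> cent B x y = 0.

Definition alpha_star (R : pzRingType) (D : nat) (i : 'I_D) : cmx R D :=
  cmk (fun x y => if x == y then (if x i then -1 else 1) else 0).

(* Main.v *)
Require Import Defs.
From mathcomp Require Import all_boot all_order all_algebra.
From mathcomp Require Import ring.
Import Order.TTheory GRing.Theory Num.Theory.
Local Open Scope ring_scope.

Definition sgc (R : pzRingType) {D : nat} (i : 'I_D) (x : cube D) : R :=
  if x i then -1 else 1.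

Lemma alpha_diag (R : pzRingType) (D : nat) (i : 'I_D) :
  alpha_star R i = diag_mx (\row_k sgc R i (@enum_val (cube D) _ k) : 'rV[R]_(#|cube D|)).
Proof.
apply/matrixP=> r c; rewrite !mxE (inj_eq enum_val_inj).
by case: eqP => [->|]; rewrite /= ?mulr1n ?mulr0n.
Qed.

Lemma expr_entry (R : comPzRingType) (D : nat) (i j : 'I_D) (B : cmx R D) r c :
  (alpha_star R i *m alpha_star R j *m B - alpha_star R i *m B *m alpha_star R j
     - alpha_star R j *m B *m alpha_star R i + B *m alpha_star R i *m alpha_star R j) r c
  = (sgc R i (enum_val r) - sgc R i (enum_val c)) *
    (sgc R j (enum_val r) - sgc R j (enum_val c)) * B r c.
Proof.
rewrite -(mulmxA (alpha_star R i)) !alpha_diag !(mul_diag_mx, mul_mx_diag) !mxE.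
ring.
Qed.

Lemma sgc_diff (R : realFieldType) (D : nat) (i : 'I_D) (x y : cube D) :
  x i != y i -> sgc R i x - sgc R i y != 0.
Proof.
rewrite /sgc; case: (x i); case: (y i) => //= _.
- rewrite -opprD oppr_eq0 -[1 + 1]/(2%:R) pnatr_eq0 //.
- rewrite opprK -[1 + 1]/(2%:R) pnatr_eq0 //.
Qed.

Theorem proposition7p3 (R : realFieldType) (D : nat) (hD : (1 <= D)%N)
  (B : cmx R D) :
  A_like B <->
  (B *m adjA R D = adjA R D *m B /\
   forall i j : 'I_D, (i < j)%N ->
     alpha_star R i *m alpha_star R j *m B - alpha_star R i *m B *m alpha_star R j
     - alpha_star R j *m B *m alpha_star R i + B *m alpha_star R i *m alpha_star R j
     = 0).
Proof.
split.
- case=> hc hz; split=> // i j lij.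
  apply/matrixP=> r c; rewrite expr_entry mxE.
  set x := enum_val r; set y := enum_val c.
  have [ei|ni] := eqVneq (x i) (y i).
    by rewrite /sgc ei subrr !mul0r.
  have [ej|nj] := eqVneq (x j) (y j).
    by rewrite /sgc ej subrr mulr0 mul0r.
  have h2 : (1 < hdist x y)%N.
    apply/card_gt1P; exists i, j; rewrite !inE ni nj; split => //.
    by rewrite neq_ltn lij.
  have xy : x != y by apply: contraTneq h2 => ->; rewrite /hdist (_ : [set _ | _] = set0) ?cards0 //; apply/setP=> k; rewrite !inE eqxx.
  have na : ~~ adjQ x y by rewrite /adjQ neq_ltn h2 orbT.
  have := hz x y xy na; rewrite /cent /x /y !enum_valK => ->; by rewrite mulr0.
- case=> hc hz; split=> // x y xy na.
  have h2 : (1 < hdist x y)%N.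
    move: na; rewrite /adjQ /hdist.
    have : [set i | x i != y i] != set0.
      apply: contra xy => /eqP e; apply/eqP/ffunP=> k.
      by apply/eqP; apply: negbNE; rewrite -[_ != _](@in_set _ (fun k => x k != y k)) e inE.
    rewrite -card_gt0; case: #|_| => [|[|n]] //.
  have [i [j [ii jj nij]]] := card_gt1P h2.
  rewrite !inE in ii jj.
  wlog lij : i j ii jj nij / (i < j)%N.
    move=> W; case: (ltngtP i j) => l.
    - exact: (W i j).
    - by apply: (W j i) => //; rewrite eq_sym.
    - by move: nij; rewrite (val_inj l) eqxx.
  have := hz i j lij; move/matrixP => /(_ (enum_rank x) (enum_rank y)).
  rewrite expr_entry mxE !enum_rankK => /eqP.
  rewrite !mulf_eq0 (negPf (@sgc_diff R _ _ _ _ ii)) (negPf (@sgc_diff R _ _ _ _ jj)) /=.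
  by move/eqP.
Qed.
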